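(* Let $L$ be a left inverse semigroup and $R$ a right inverse semigroup with a common quasi-ideal inverse transversal $S^0$. Let $L|\times|R=\{(x,a)\in L\times R: x^0=a^0\}$ with multiplication $(x,a)(y,b)=(xy^{00},\,a^{00}b)$. Then $L|\times|R$ is an orthodox semigroup with a quasi-ideal inverse transversal isomorphic to $S^0$. Moreover every orthodox semigroup with a quasi-ideal inverse transversal can be constructed (up to isomorphism) in this way.
   Context: A left (right) inverse semigroup is a regular semigroup in which each $\mathcal{R}$-class (each $\mathcal{L}$-class) contains a unique idempotent. An orthodox semigroup is a regular semigroup whose idempotents form a subsemigroup. An inverse subsemigroup $T^0$ of a regular semigroup $T$ is an inverse transversal if each $x\in T$ has exactly one inverse $x^0$ in $T^0$, and $x^{00}=(x^0)^0$; it is a quasi-ideal if $T^0TT^0\subseteq T^0$. ''Common quasi-ideal inverse transversal'' means $S^0$ is a subsemigroup of both $L$ and $R$ and a quasi-ideal inverse transversal of each; $x^0$ is computed in $L$ for $x\in L$ and in $R$ for $a\in R$. *)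

(* Defs.v *)
Section Semigroups.
Context {T : Type} (m : T -> T -> T).

Definition associative_op : Prop := forall x y z, m x (m y z) = m (m x y) z.

Definition idempotent (e : T) : Prop := m e e = e.

Definition is_inverse (x y : T) : Prop := m (m x y) x = x /\ m (m y x) y = y.

Definition regular : Prop := forall x, exists y, m (m x y) x = x.

(* Green's relations, using S^1 *)
Definition Rrel (x y : T) : Prop :=
  (x = y \/ exists s, x = m y s) /\ (y = x \/ exists s, y = m x s).
Definition Lrel (x y : T) : Prop :=
  (x = y \/ exists s, x = m s y) /\ (y = x \/ exists s, y = m s x).

Definition left_inverse_semigroup : Prop :=
  associative_op /\ regular /\
  forall x, exists! e, idempotent e /\ Rrel x e.

Definition right_inverse_semigroup : Prop :=
  associative_op /\ regular /\
  forall x, exists! e, idempotent e /\ Lrel x e.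

Definition orthodox_semigroup : Prop :=
  associative_op /\ regular /\
  forall e f, idempotent e -> idempotent f -> idempotent (m e f).

End Semigroups.

(* A quasi-ideal inverse transversal of (T, m), presented as an isomorphic copy:
   (S0, m0) is embedded into (T, m) by the injective homomorphism j, whose image
   is the transversal S^0; o x is the (unique) inverse x^0 of x lying in S^0,
   i.e. x^0 = j (o x). *)
Definition qi_inverse_transversal {T S0 : Type} (m : T -> T -> T)
    (m0 : S0 -> S0 -> S0) (j : S0 -> T) (o : T -> S0) : Prop :=
  (forall s t, j (m0 s t) = m (j s) (j t)) /\
  (forall s t, j s = j t -> s = t) /\
  (forall x, is_inverse m x (j (o x))) /\
  (forall x s, is_inverse m x (j s) -> s = o x) /\
  (forall s t x, exists u, m (m (j s) x) (j t) = j u).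

Definition spined_mul {L R S0 : Type} (mL : L -> L -> L) (mR : R -> R -> R)
    (iL : S0 -> L) (oL : L -> S0) (iR : S0 -> R) (oR : R -> S0)
    (u v : L * R) : L * R :=
  (mL (fst u) (iL (oL (iL (oL (fst v))))),
   mR (iR (oR (iR (oR (snd u))))) (snd v)).

Definition spined_carrier {L R S0 : Type} (oL : L -> S0) (oR : R -> S0)
    (u : L * R) : Prop := oL (fst u) = oR (snd u).

Definition sub_mul {T : Type} (m : T -> T -> T) (P : T -> Prop)
    (H : forall u v, P u -> P v -> P (m u v)) (u v : sig P) : sig P :=
  exist P (m (proj1_sig u) (proj1_sig v))
        (H _ _ (proj2_sig u) (proj2_sig v)).

Definition is_isomorphism {A B : Type} (mA : A -> A -> A) (mB : B -> B -> B)
    (f : A -> B) : Prop :=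
  (forall x y, f (mA x y) = mB (f x) (f y)) /\
  (forall x y, f x = f y -> x = y) /\
  (forall z, exists x, f x = z).

(* Main.v *)
Require Import Defs.
From Stdlib Require Import ProofIrrelevance Setoid.

Section Gen.
Context {T S0 : Type} (m : T -> T -> T) (m0 : S0 -> S0 -> S0) (j : S0 -> T) (o : T -> S0).
Context (Hass : associative_op m) (Hq : qi_inverse_transversal m m0 j o).

Local Notation inv s := (o (j s)).

Lemma jm s t : j (m0 s t) = m (j s) (j t).
Proof. destruct Hq as [H _]; apply H. Qed.
Lemma jinj s t : j s = j t -> s = t.
Proof. destruct Hq as [_ [H _]]; apply H. Qed.
Lemma x1 x : m x (m (j (o x)) x) = x.
Proof. destruct Hq as [_ [_ [H _]]]. destruct (H x) as [H1 _]. rewrite Hass; exact H1. Qed.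
Lemma x2 x : m (j (o x)) (m x (j (o x))) = j (o x).
Proof. destruct Hq as [_ [_ [H _]]]. destruct (H x) as [_ H1]. rewrite Hass; exact H1. Qed.
Lemma xuniq x s : m x (m (j s) x) = x -> m (j s) (m x (j s)) = j s -> s = o x.
Proof. destruct Hq as [_ [_ [_ [H _]]]]. intros A B. apply H. split; rewrite <- Hass; auto. Qed.
Lemma xqi s t x : exists u, m (j s) (m x (j t)) = j u.
Proof. destruct Hq as [_ [_ [_ [_ H]]]]. rewrite Hass. apply H. Qed.

Lemma m0A s t u : m0 s (m0 t u) = m0 (m0 s t) u.
Proof. apply jinj. rewrite !jm. apply Hass. Qed.
Lemma jr s t z : m (j s) (m (j t) z) = m (j (m0 s t)) z.
Proof. rewrite jm, Hass; reflexivity. Qed.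

Ltac ra := repeat rewrite <- m0A.
Ltac ae := ra; reflexivity.

Lemma s1 s : m0 s (m0 (inv s) s) = s.
Proof. apply jinj. rewrite !jm. apply x1. Qed.
Lemma s2 s : m0 (inv s) (m0 s (inv s)) = inv s.
Proof. apply jinj. rewrite !jm. apply x2. Qed.
Lemma suniq s t : m0 s (m0 t s) = s -> m0 t (m0 s t) = t -> t = inv s.
Proof. intros A B. apply xuniq; rewrite <- !jm; congruence. Qed.
Lemma sinvinv s : inv (inv s) = s.
Proof. symmetry. apply suniq; [apply s2 | apply s1]. Qed.
Lemma idemr e x : m0 e e = e -> m0 e (m0 e x) = m0 e x.
Proof. intro H. rewrite m0A, H; reflexivity. Qed.
Lemma idem_inv e : m0 e e = e -> inv e = e.
Proof. intro H. symmetry. apply suniq; rewrite idemr; auto. Qed.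

Lemma idem_mul e f : m0 e e = e -> m0 f f = f -> m0 (m0 e f) (m0 e f) = m0 e f.
Proof.
  intros He Hf.
  set (a := m0 e f). set (z := inv a).
  assert (H1 : m0 a (m0 z a) = a) by apply s1.
  assert (H2 : m0 z (m0 a z) = z) by apply s2.
  assert (Hw : m0 f (m0 z e) = z).
  { apply suniq.
    - transitivity (m0 a (m0 z a)); [unfold a; ra; rewrite (idemr e _ He), (idemr f _ Hf); reflexivity | exact H1].
    - transitivity (m0 f (m0 (m0 z (m0 a z)) e)); [unfold a; ra; rewrite (idemr e _ He); rewrite (idemr f _ Hf); reflexivity|].
      rewrite H2; reflexivity. }
  assert (Hz : m0 z z = z).
  { transitivity (m0 (m0 f (m0 z e)) (m0 f (m0 z e))); [rewrite Hw; reflexivity|].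
    transitivity (m0 f (m0 (m0 z (m0 a z)) e)); [unfold a; ae|]. rewrite H2, Hw; reflexivity. }
  assert (Ha : a = inv z) by (apply suniq; assumption).
  change (m0 a a = a). rewrite Ha, (idem_inv z Hz). exact Hz.
Qed.

Lemma idem_comm e f : m0 e e = e -> m0 f f = f -> m0 e f = m0 f e.
Proof.
  intros He Hf.
  assert (E1 := idem_mul e f He Hf). assert (E2 := idem_mul f e Hf He).
  assert (H : m0 f e = inv (m0 e f)).
  { apply suniq.
    - transitivity (m0 (m0 e f) (m0 e f)); [ra; rewrite (idemr f _ Hf), (idemr e _ He); reflexivity | exact E1].
    - transitivity (m0 (m0 f e) (m0 f e)); [ra; rewrite (idemr e _ He), (idemr f _ Hf); reflexivity | exact E2]. }
  rewrite H, (idem_inv _ E1). reflexivity.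
Qed.

Lemma ssi s : m0 (m0 s (inv s)) (m0 s (inv s)) = m0 s (inv s).
Proof. transitivity (m0 (m0 s (m0 (inv s) s)) (inv s)); [ae|]. rewrite s1; reflexivity. Qed.
Lemma sis s : m0 (m0 (inv s) s) (m0 (inv s) s) = m0 (inv s) s.
Proof. transitivity (m0 (m0 (inv s) (m0 s (inv s))) s); [ae|]. rewrite s2; reflexivity. Qed.

Lemma inv_mul s t : inv (m0 s t) = m0 (inv t) (inv s).
Proof.
  symmetry. apply suniq.
  - transitivity (m0 s (m0 (m0 (m0 t (inv t)) (m0 (inv s) s)) t)); [ae|].
    rewrite (idem_comm _ _ (ssi t) (sis s)).
    transitivity (m0 (m0 s (m0 (inv s) s)) (m0 t (m0 (inv t) t))); [ae|].
    rewrite !s1; reflexivity.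
  - transitivity (m0 (inv t) (m0 (m0 (m0 (inv s) s) (m0 t (inv t))) (inv s))); [ae|].
    rewrite (idem_comm _ _ (sis s) (ssi t)).
    transitivity (m0 (m0 (inv t) (m0 t (inv t))) (m0 (inv s) (m0 s (inv s)))); [ae|].
    rewrite !s2; reflexivity.
Qed.

Ltac aeT := repeat rewrite jm; repeat rewrite <- Hass; reflexivity.

Section LeftI.
Context (HL : left_inverse_semigroup m).

Lemma L1 x : m (j (o x)) x = j (m0 (o x) (inv (o x))).
Proof.
  destruct HL as [_ [_ HU]].
  destruct (HU (j (o x))) as [e0 [_ Hun]].
  assert (A : e0 = m (j (o x)) x).
  { apply Hun. split.
    - unfold idempotent. rewrite <- Hass, x1. reflexivity.
    - split; right.
      + exists (j (o x)). rewrite <- Hass. symmetry; apply x2.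
      + exists x. reflexivity. }
  assert (B : e0 = j (m0 (o x) (inv (o x)))).
  { apply Hun. split.
    - unfold idempotent. rewrite <- jm, ssi. reflexivity.
    - split; right.
      + exists (j (o x)). rewrite <- jm, <- m0A, s1. reflexivity.
      + exists (j (inv (o x))). apply jm. }
  congruence.
Qed.

Lemma oxt x t : o (m x (j t)) = m0 (inv t) (o x).
Proof.
  symmetry. apply xuniq.
  - transitivity (m x (m (j t) (m (j (inv t)) (m (m (j (o x)) x) (j t))))); [aeT|].
    rewrite L1.
    transitivity (m x (j (m0 (m0 (m0 t (inv t)) (m0 (o x) (inv (o x)))) t))); [aeT|].
    rewrite (idem_comm _ _ (ssi t) (ssi (o x))).
    transitivity (m x (m (j (m0 (o x) (inv (o x)))) (j (m0 t (m0 (inv t) t))))); [aeT|].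
    rewrite s1, <- L1.
    transitivity (m (m x (m (j (o x)) x)) (j t)); [aeT|].
    rewrite x1. reflexivity.
  - transitivity (m (j (inv t)) (m (m (j (o x)) x) (m (j t) (j (m0 (inv t) (o x)))))); [aeT|].
    rewrite L1.
    transitivity (j (m0 (inv t) (m0 (m0 (m0 (o x) (inv (o x))) (m0 t (inv t))) (o x)))); [aeT|].
    rewrite (idem_comm _ _ (ssi (o x)) (ssi t)).
    transitivity (j (m0 (m0 (inv t) (m0 t (inv t))) (m0 (o x) (m0 (inv (o x)) (o x))))); [aeT|].
    rewrite s1, s2. reflexivity.
Qed.
End LeftI.

Section RightI.
Context (HR : right_inverse_semigroup m).

Lemma R1 a : m a (j (o a)) = j (m0 (inv (o a)) (o a)).
Proof.
  destruct HR as [_ [_ HU]].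
  destruct (HU (j (o a))) as [e0 [_ Hun]].
  assert (A : e0 = m a (j (o a))).
  { apply Hun. split.
    - unfold idempotent. rewrite <- Hass, x2. reflexivity.
    - split; right.
      + exists (j (o a)). symmetry; apply x2.
      + exists a. reflexivity. }
  assert (B : e0 = j (m0 (inv (o a)) (o a))).
  { apply Hun. split.
    - unfold idempotent. rewrite <- jm, sis. reflexivity.
    - split; right.
      + exists (j (o a)). rewrite <- jm, s1. reflexivity.
      + exists (j (inv (o a))). apply jm. }
  congruence.
Qed.

Lemma otx a t : o (m (j t) a) = m0 (o a) (inv t).
Proof.
  symmetry. apply xuniq.
  - transitivity (m (j t) (m (m a (j (o a))) (m (j (m0 (inv t) t)) a))); [aeT|].
    rewrite R1.
    transitivity (m (j (m0 t (m0 (m0 (inv (o a)) (o a)) (m0 (inv t) t)))) a); [aeT|].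
    rewrite (idem_comm _ _ (sis (o a)) (sis t)).
    transitivity (m (j t) (m (j (m0 (inv (o a)) (o a))) a)).
    { transitivity (m (j (m0 (m0 t (m0 (inv t) t)) (m0 (inv (o a)) (o a)))) a); [aeT|].
      rewrite s1. aeT. }
    rewrite <- R1.
    transitivity (m (j t) (m a (m (j (o a)) a))); [aeT|].
    rewrite x1. reflexivity.
  - transitivity (m (j (m0 (o a) (m0 (inv t) t))) (m (m a (j (o a))) (j (inv t)))); [aeT|].
    rewrite R1.
    transitivity (j (m0 (o a) (m0 (m0 (m0 (inv t) t) (m0 (inv (o a)) (o a))) (inv t)))); [aeT|].
    rewrite (idem_comm _ _ (sis t) (sis (o a))).
    transitivity (j (m0 (m0 (o a) (m0 (inv (o a)) (o a))) (m0 (inv t) (m0 t (inv t))))); [aeT|].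
    rewrite s1, s2. reflexivity.
Qed.
End RightI.
End Gen.

Lemma sig_ext {A : Type} (P : A -> Prop) (u v : sig P) : proj1_sig u = proj1_sig v -> u = v.
Proof. destruct u, v; simpl; intros ->; f_equal; apply proof_irrelevance. Qed.

Section Part1.
Context {L R S0 : Type} (mL : L -> L -> L) (mR : R -> R -> R) (m0 : S0 -> S0 -> S0)
  (iL : S0 -> L) (oL : L -> S0) (iR : S0 -> R) (oR : R -> S0).
Context (HLi : left_inverse_semigroup mL) (HRi : right_inverse_semigroup mR)
  (HqL : qi_inverse_transversal mL m0 iL oL) (HqR : qi_inverse_transversal mR m0 iR oR).

Let HassL : associative_op mL := proj1 HLi.
Let HassR : associative_op mR := proj1 HRi.
Let jmL := jm mL m0 iL oL HqL.
Let jmR := jm mR m0 iR oR HqR.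
Let m0A' := m0A mL m0 iL oL HassL HqL.
Let sinvL := sinvinv mL m0 iL oL HassL HqL.
Let sinvR := sinvinv mR m0 iR oR HassR HqR.
Let invmulL := inv_mul mL m0 iL oL HassL HqL.
Let invmulR := inv_mul mR m0 iR oR HassR HqR.
Let oxtL := oxt mL m0 iL oL HassL HqL HLi.
Let otxR := otx mR m0 iR oR HassR HqR HRi.
Let L1L := L1 mL m0 iL oL HassL HqL HLi.
Let R1R := R1 mR m0 iR oR HassR HqR HRi.

Lemma inv_agree s : oL (iL s) = oR (iR s).
Proof. apply (suniq mR m0 iR oR HassR HqR); [apply (s1 mL m0 iL oL HassL HqL) | apply (s2 mL m0 iL oL HassL HqL)]. Qed.

Lemma spined_closed : forall u v,
  spined_carrier oL oR u -> spined_carrier oL oR v ->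
  spined_carrier oL oR (spined_mul mL mR iL oL iR oR u v).
Proof.
  intros [x a] [y b]; unfold spined_carrier, spined_mul; simpl. intros Hu Hv.
  rewrite oxtL, otxR, sinvL, sinvR. congruence.
Qed.

Let Hcl := spined_closed.
Let P := sub_mul _ _ Hcl.

Lemma p1_assoc : associative_op P.
Proof.
  intros [[x a] Hx] [[y b] Hy] [[z c] Hz]. apply sig_ext. simpl. unfold spined_mul; simpl. f_equal.
  - rewrite oxtL, sinvL, invmulL, jmL, HassL. reflexivity.
  - rewrite otxR, sinvR, invmulR, jmR, HassR. reflexivity.
Qed.

Let x1L := x1 mL m0 iL oL HassL HqL.
Let x1R := x1 mR m0 iR oR HassR HqR.
Let jinjL := jinj mL m0 iL oL HqL.
Let jinjR := jinj mR m0 iR oR HqR.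

Definition j0 (s : S0) : sig (spined_carrier oL oR) := exist _ (iL s, iR s) (inv_agree s).
Definition o0 (u : sig (spined_carrier oL oR)) : S0 := oL (fst (proj1_sig u)).

Lemma reg_eq u : P (P u (j0 (o0 u))) u = u.
Proof.
  destruct u as [[x a] Hu]; apply sig_ext; unfold spined_carrier in Hu; unfold o0, j0 in *; simpl in *.
  unfold spined_mul; simpl. f_equal.
  - rewrite sinvL, <- HassL, <- jmL, <- L1L. apply x1L.
  - rewrite Hu, <- jmR.
    rewrite (idem_inv mR m0 iR oR HassR HqR _ (sis mR m0 iR oR HassR HqR _)).
    rewrite (idem_inv mR m0 iR oR HassR HqR _ (sis mR m0 iR oR HassR HqR _)).
    rewrite <- R1R, <- HassR. apply x1R.
Qed.

Lemma inv_b u : P (P (j0 (o0 u)) u) (j0 (o0 u)) = j0 (o0 u).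
Proof.
  destruct u as [[x a] Hu]; apply sig_ext; unfold spined_carrier in Hu; unfold o0, j0 in *; simpl in *.
  unfold spined_mul; simpl. f_equal.
  - rewrite sinvL, <- !jmL, <- m0A'. f_equal. apply (s1 mL m0 iL oL HassL HqL).
  - rewrite sinvR, Hu, otxR, invmulR, sinvR, <- !jmR. f_equal.
    rewrite <- (m0A mR m0 iR oR HassR HqR). apply (s1 mR m0 iR oR HassR HqR).
Qed.

Let idcL := idem_comm mL m0 iL oL HassL HqL.
Let idcR := idem_comm mR m0 iR oR HassR HqR.
Let idiL := idem_inv mL m0 iL oL HassL HqL.
Let idiR := idem_inv mR m0 iR oR HassR HqR.
Let m0A'' := m0A mR m0 iR oR HassR HqR.

Lemma p1_idem e f : idempotent P e -> idempotent P f -> idempotent P (P e f).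
Proof.
  destruct e as [[x a] Hx], f as [[y b] Hy]. unfold idempotent. intros He Hf.
  apply (f_equal (fun w => proj1_sig w)) in He; simpl in He; unfold spined_mul in He; simpl in He.
  apply (f_equal (fun w => proj1_sig w)) in Hf; simpl in Hf; unfold spined_mul in Hf; simpl in Hf.
  injection He as He1 He2. injection Hf as Hf1 Hf2.
  assert (Ip : m0 (oL x) (oL x) = oL x).
  { rewrite <- He1 at 3. rewrite oxtL, sinvL. reflexivity. }
  assert (Iq : m0 (oL y) (oL y) = oL y).
  { rewrite <- Hf1 at 3. rewrite oxtL, sinvL. reflexivity. }
  assert (Ia : m0 (oR a) (oR a) = oR a).
  { rewrite <- He2 at 3. rewrite otxR, sinvR. reflexivity. }
  assert (Ib : m0 (oR b) (oR b) = oR b).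
  { rewrite <- Hf2 at 3. rewrite otxR, sinvR. reflexivity. }
  pose proof (idiL _ Ip) as ip. pose proof (idiL _ Iq) as iq.
  pose proof (idiR _ Ia) as ia. pose proof (idiR _ Ib) as ib.
  rewrite ip in He1. rewrite iq in Hf1. rewrite ia in He2. rewrite ib in Hf2.
  apply sig_ext; simpl; unfold spined_mul; simpl. f_equal.
  - rewrite !iq, oxtL, !iq, invmulL, ip, iq.
    assert (E : m0 (oL y) (m0 (oL x) (oL y)) = m0 (oL x) (oL y)).
    { rewrite m0A', (idcL _ _ Iq Ip), <- m0A', Iq. reflexivity. }
    rewrite <- HassL, <- jmL, E, jmL, HassL, He1. reflexivity.
  - rewrite !ia, otxR, !ia, invmulR, ia, ib.
    assert (E : m0 (m0 (oR a) (oR b)) (oR a) = m0 (oR a) (oR b)).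
    { rewrite <- m0A'', (idcR _ _ Ib Ia), m0A'', Ia. reflexivity. }
    rewrite HassR, <- jmR, E, jmR, <- HassR, Hf2. reflexivity.
Qed.

Lemma p1_uniq u s : is_inverse P u (j0 s) -> s = o0 u.
Proof.
  destruct u as [[x a] Hu]. unfold o0; simpl. intros [Ha Hb].
  apply (f_equal (fun w => fst (proj1_sig w))) in Ha; simpl in Ha; unfold spined_mul in Ha; simpl in Ha.
  apply (f_equal (fun w => fst (proj1_sig w))) in Hb; simpl in Hb; unfold spined_mul in Hb; simpl in Hb.
  rewrite sinvL in Ha, Hb.
  set (p := oL x) in *. set (q := oL (iL p)).
  assert (E1 : m0 (m0 (m0 p q) s) q = m0 p q).
  { apply jinjL. rewrite !jmL, <- (jmL p q). unfold q, p. rewrite <- L1L. fold p.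
    transitivity (mL (iL p) (mL (mL x (iL s)) (iL q))); [rewrite !HassL; reflexivity|].
    unfold q; rewrite Ha. reflexivity. }
  assert (E2 : m0 q (m0 s q) = q).
  { transitivity (m0 q (m0 (m0 (m0 p q) s) q)).
    - symmetry. transitivity (m0 (m0 q (m0 p q)) (m0 s q)); [rewrite <- !m0A'; reflexivity|].
      unfold q. rewrite (s2 mL m0 iL oL HassL HqL). reflexivity.
    - rewrite E1. apply (s2 mL m0 iL oL HassL HqL). }
  assert (E3 : m0 s (m0 q s) = s).
  { apply jinjL. rewrite !jmL, HassL. exact Hb. }
  assert (E4 := suniq mL m0 iL oL HassL HqL q s E2 E3).
  rewrite E4. unfold q. apply sinvL.
Qed.

Lemma p1_qi s t u : exists w, P (P (j0 s) u) (j0 t) = j0 w.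
Proof.
  destruct u as [[x a] Hu]. unfold spined_carrier in Hu; simpl in Hu.
  exists (m0 s (m0 (oL (iL (oL x))) t)).
  apply sig_ext; simpl; unfold spined_mul; simpl. f_equal.
  - rewrite sinvL, !jmL, HassL. reflexivity.
  - rewrite sinvR, otxR, invmulR, sinvR, <- Hu, inv_agree, !jmR, HassR. reflexivity.
Qed.

Lemma part1_main : exists Hcl0 : (forall u v,
                      spined_carrier oL oR u -> spined_carrier oL oR v ->
                      spined_carrier oL oR (spined_mul mL mR iL oL iR oR u v)),
        orthodox_semigroup (sub_mul _ _ Hcl0) /\
        exists (j : S0 -> sig (spined_carrier oL oR))
               (o : sig (spined_carrier oL oR) -> S0),
          qi_inverse_transversal (sub_mul _ _ Hcl0) m0 j o.
Proof.
  exists Hcl. split.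
  - split; [apply p1_assoc | split].
    + intro u; exists (j0 (o0 u)); apply reg_eq.
    + apply p1_idem.
  - exists j0, o0. split; [|split; [|split; [|split]]].
    + intros s t; apply sig_ext; simpl; unfold spined_mul; simpl.
      rewrite sinvL, sinvR, jmL, jmR; reflexivity.
    + intros s t H; apply (f_equal (fun w => fst (proj1_sig w))) in H; simpl in H.
      apply jinjL; exact H.
    + intros u; split; [apply reg_eq | apply inv_b].
    + intros u s; apply p1_uniq.
    + intros s t u; apply p1_qi.
Qed.
End Part1.

Section Part2.
Context {S S0 : Type} (m : S -> S -> S) (m0 : S0 -> S0 -> S0) (j : S0 -> S) (o : S -> S0).
Context (HO : orthodox_semigroup m) (Hq : qi_inverse_transversal m m0 j o).

Let Hass : associative_op m := proj1 HO.
Let Hid : forall e f, idempotent m e -> idempotent m f -> idempotent m (m e f) := proj2 (proj2 HO).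
Let jm' := jm m m0 j o Hq.
Let jinj' := jinj m m0 j o Hq.
Let x1' := x1 m m0 j o Hass Hq.
Let x2' := x2 m m0 j o Hass Hq.
Let xuniq' := xuniq m m0 j o Hass Hq.
Let xqi' := xqi m m0 j o Hass Hq.
Let m0A' := m0A m m0 j o Hass Hq.
Let s1' := s1 m m0 j o Hass Hq.
Let s2' := s2 m m0 j o Hass Hq.
Let sinv' := sinvinv m m0 j o Hass Hq.
Let invmul' := inv_mul m m0 j o Hass Hq.
Let idc' := idem_comm m m0 j o Hass Hq.
Let idi' := idem_inv m m0 j o Hass Hq.
Let ssi' := ssi m m0 j o Hass Hq.
Let sis' := sis m m0 j o Hass Hq.

Ltac aeT := repeat rewrite jm'; repeat rewrite <- Hass; reflexivity.
Ltac ra := repeat rewrite <- m0A'.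

Lemma O1 x y : o (m x y) = m0 (o y) (o x).
Proof.
  pose (e := m (j (o x)) x). pose (f := m y (j (o y))).
  assert (He : idempotent m e) by (unfold idempotent, e; rewrite <- Hass, x1'; reflexivity).
  assert (Hf : idempotent m f) by (unfold idempotent, f; rewrite <- Hass, x2'; reflexivity).
  assert (Hef := Hid _ _ He Hf). assert (Hfe := Hid _ _ Hf He).
  unfold idempotent in Hef, Hfe.
  assert (Ex : m x e = x) by apply x1'.
  assert (Ey : m f y = y) by (unfold f; rewrite <- Hass; apply x1').
  assert (Fx : m e (j (o x)) = j (o x)) by (unfold e; rewrite <- Hass; apply x2').
  assert (Fy : m (j (o y)) f = j (o y)) by apply x2'.
  symmetry. apply xuniq'.
  - transitivity (m x (m (m f e) y)); [unfold e, f; aeT|].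
    transitivity (m (m x e) (m (m f e) (m f y))); [rewrite Ex, Ey; reflexivity|].
    transitivity (m x (m (m (m e f) (m e f)) y)); [unfold e, f; aeT|].
    rewrite Hef.
    transitivity (m (m x e) (m f y)); [unfold e, f; aeT|].
    rewrite Ex, Ey; reflexivity.
  - transitivity (m (j (o y)) (m (m e f) (j (o x)))); [unfold e, f; aeT|].
    transitivity (m (m (j (o y)) f) (m (m e f) (m e (j (o x))))); [rewrite Fx, Fy; reflexivity|].
    transitivity (m (j (o y)) (m (m (m f e) (m f e)) (j (o x)))); [unfold e, f; aeT|].
    rewrite Hfe.
    transitivity (m (m (j (o y)) f) (m e (j (o x)))); [unfold e, f; aeT|].
    rewrite Fx, Fy. symmetry; apply jm'.
Qed.

Lemma C x y : m (j (o x)) (m x (m y (j (o y)))) = j (m0 (m0 (o x) (o (j (o x)))) (m0 (o (j (o y))) (o y))).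
Proof.
  destruct (xqi' (o x) (o y) (m x y)) as [w Hw].
  assert (U : m (j (o x)) (m x (m y (j (o y)))) = j w) by (rewrite <- Hw; aeT).
  pose (e := m (j (o x)) x). pose (f := m y (j (o y))).
  assert (He : idempotent m e) by (unfold idempotent, e; rewrite <- Hass, x1'; reflexivity).
  assert (Hf : idempotent m f) by (unfold idempotent, f; rewrite <- Hass, x2'; reflexivity).
  assert (Hef := Hid _ _ He Hf). unfold idempotent in Hef.
  assert (Iw : m0 w w = w).
  { apply jinj'. rewrite jm', <- U.
    transitivity (m (m e f) (m e f)); [unfold e, f; aeT|]. rewrite Hef. unfold e, f; aeT. }
  assert (Ew : w = m0 (m0 (o x) (o (j (o x)))) (m0 (o (j (o y))) (o y))).
  { rewrite <- (idi' w Iw), <- U, !O1.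
    rewrite (idc' _ _ (ssi' (o x)) (sis' (o y))). ra; reflexivity. }
  rewrite U, Ew. reflexivity.
Qed.

Lemma KI x y : m x (m y (m (j (o y)) (j (o (j (o y)))))) =
  m x (m (j (o x)) (m (j (o (j (o x)))) (j (o (j (o y)))))).
Proof.
  transitivity (m (m x (m (j (o x)) x)) (m y (m (j (o y)) (j (o (j (o y))))))); [rewrite x1'; reflexivity|].
  transitivity (m x (m (m (j (o x)) (m x (m y (j (o y))))) (j (o (j (o y)))))); [aeT|].
  rewrite C.
  transitivity (m x (j (m0 (m0 (o x) (o (j (o x)))) (m0 (o (j (o y))) (m0 (o y) (o (j (o y)))))))); [aeT|].
  rewrite s2'. aeT.
Qed.

Lemma KI' x y : m (j (o (j (o x)))) (m (j (o x)) (m x y)) =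
  m (j (o (j (o x)))) (m (j (o (j (o y)))) (m (j (o y)) y)).
Proof.
  transitivity (m (j (o (j (o x)))) (m (j (o x)) (m x (m y (m (j (o y)) y))))); [rewrite x1'; reflexivity|].
  transitivity (m (j (o (j (o x)))) (m (m (j (o x)) (m x (m y (j (o y))))) y)); [aeT|].
  rewrite C.
  transitivity (m (j (m0 (m0 (o (j (o x))) (m0 (o x) (o (j (o x))))) (m0 (o (j (o y))) (o y)))) y); [aeT|].
  rewrite s2'. aeT.
Qed.

Lemma PHI1 x y : m (m x y) (m (j (o (m x y))) (j (o (j (o (m x y)))))) =
  m x (m (j (o x)) (m (j (o (j (o x)))) (j (o (j (o y)))))).
Proof.
  rewrite !O1, invmul'.
  set (E := m0 (o x) (o (j (o x)))). set (F := m0 (o (j (o y))) (o y)).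
  assert (HE : m0 E E = E) by apply ssi'. assert (HF : m0 F F = F) by apply sis'.
  transitivity (m (m x (m (j (o x)) x)) (m y (m (j (m0 (o y) (o x))) (j (m0 (o (j (o x))) (o (j (o y)))))))); [rewrite x1'; aeT|].
  transitivity (m x (m (m (j (o x)) (m x (m y (j (o y))))) (m (j (o x)) (m (j (o (j (o x)))) (j (o (j (o y)))))))); [aeT|].
  rewrite C. fold E F.
  transitivity (m x (j (m0 (m0 (m0 E F) E) (o (j (o y)))))); [unfold E, F; aeT|].
  rewrite (idc' E F HE HF).
  transitivity (m x (j (m0 (m0 F (m0 E E)) (o (j (o y)))))); [unfold E, F; aeT|].
  rewrite HE, <- (idc' E F HE HF).
  transitivity (m x (j (m0 E (m0 (o (j (o y))) (m0 (o y) (o (j (o y)))))))); [unfold E, F; aeT|].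
  rewrite s2'. unfold E; aeT.
Qed.

Lemma PHI2 x y : m (j (o (j (o (m x y))))) (m (j (o (m x y))) (m x y)) =
  m (j (o (j (o x)))) (m (j (o (j (o y)))) (m (j (o y)) y)).
Proof.
  rewrite !O1, invmul'.
  set (E := m0 (o x) (o (j (o x)))). set (F := m0 (o (j (o y))) (o y)).
  assert (HE : m0 E E = E) by apply ssi'. assert (HF : m0 F F = F) by apply sis'.
  transitivity (m (j (m0 (o (j (o x))) (o (j (o y))))) (m (j (m0 (o y) (o x))) (m x (m y (m (j (o y)) y))))); [rewrite x1'; aeT|].
  transitivity (m (j (o (j (o x)))) (m (j (o (j (o y)))) (m (j (o y)) (m (m (j (o x)) (m x (m y (j (o y))))) y)))); [aeT|].
  rewrite C. fold E F.
  transitivity (m (j (m0 (o (j (o x))) (m0 (m0 F E) F))) y); [unfold E, F; aeT|].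
  rewrite (idc' F E HF HE).
  transitivity (m (j (m0 (m0 (o (j (o x))) E) (m0 F F))) y); [unfold E, F; aeT|].
  rewrite HF. unfold E. rewrite s2'. unfold F; aeT.
Qed.

Definition phi1 x := m x (m (j (o x)) (j (o (j (o x))))).
Definition phi2 x := m (j (o (j (o x)))) (m (j (o x)) x).
Definition inL x : Prop := phi1 x = x.
Definition inR x : Prop := phi2 x = x.

Lemma o_phi1 x : o (phi1 x) = o x.
Proof. unfold phi1. rewrite !O1, sinv', <- m0A'. apply s1'. Qed.
Lemma o_phi2 x : o (phi2 x) = o x.
Proof. unfold phi2. rewrite !O1, sinv', <- m0A'. apply s1'. Qed.

Lemma phi1_in x : inL (phi1 x).
Proof.
  unfold inL. remember (phi1 x) as z eqn:Hz. unfold phi1 at 1.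
  assert (Oz : o z = o x) by (rewrite Hz; apply o_phi1).
  rewrite Oz, Hz. unfold phi1.
  transitivity (m x (j (m0 (m0 (o x) (o (j (o x)))) (m0 (o x) (o (j (o x))))))); [aeT|].
  rewrite ssi'. aeT.
Qed.
Lemma phi2_in x : inR (phi2 x).
Proof.
  unfold inR. remember (phi2 x) as z eqn:Hz. unfold phi2 at 1.
  assert (Oz : o z = o x) by (rewrite Hz; apply o_phi2).
  rewrite Oz, Hz. unfold phi2.
  transitivity (m (j (m0 (m0 (o (j (o x))) (o x)) (m0 (o (j (o x))) (o x)))) x); [aeT|].
  rewrite sis'. aeT.
Qed.

Lemma clL a b : inL a -> inL b -> inL (m a b).
Proof.
  unfold inL. intros Ha Hb. unfold phi1 at 1. rewrite PHI1, <- KI. f_equal. exact Hb.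
Qed.
Lemma clR a b : inR a -> inR b -> inR (m a b).
Proof.
  unfold inR. intros Ha Hb. unfold phi2 at 1. rewrite PHI2, <- KI'.
  transitivity (m (phi2 a) b); [unfold phi2; aeT | rewrite Ha; reflexivity].
Qed.

Lemma lawL x y : inL x -> inL y -> m x y = m x (j (o (j (o y)))).
Proof.
  unfold inL. intros Hx Hy.
  transitivity (m x (phi1 y)); [rewrite Hy; reflexivity|].
  unfold phi1 at 1. rewrite KI.
  transitivity (m (phi1 x) (j (o (j (o y))))); [unfold phi1; aeT|].
  rewrite Hx; reflexivity.
Qed.
Lemma lawR x y : inR x -> inR y -> m x y = m (j (o (j (o x)))) y.
Proof.
  unfold inR. intros Hx Hy.
  transitivity (m (phi2 x) y); [rewrite Hx; reflexivity|].
  transitivity (m (j (o (j (o x)))) (m (j (o x)) (m x y))); [unfold phi2; aeT|].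
  rewrite KI'.
  transitivity (m (j (o (j (o x)))) (phi2 y)); [unfold phi2; aeT|].
  rewrite Hy; reflexivity.
Qed.

Lemma j_inL s : inL (j s).
Proof. unfold inL, phi1. rewrite sinv', <- !jm'. f_equal. apply s1'. Qed.
Lemma j_inR s : inR (j s).
Proof. unfold inR, phi2. rewrite sinv', <- !jm'. f_equal. apply s1'. Qed.

Definition mLs := sub_mul m inL clL.
Definition mRs := sub_mul m inR clR.
Definition iLs (s : S0) : sig inL := exist inL (j s) (j_inL s).
Definition iRs (s : S0) : sig inR := exist inR (j s) (j_inR s).
Definition oLs (l : sig inL) : S0 := o (proj1_sig l).
Definition oRs (l : sig inR) : S0 := o (proj1_sig l).

Lemma Ls_left : left_inverse_semigroup mLs.
Proof.
  split; [|split].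
  - intros [a ?] [b ?] [c ?]; apply sig_ext; simpl; apply Hass.
  - intros [x Hx]; exists (iLs (o x)); apply sig_ext; simpl; rewrite <- Hass; apply x1'.
  - intros [x Hx]. exists (mLs (exist inL x Hx) (iLs (o x))). split.
    + split.
      * unfold idempotent; apply sig_ext; simpl. rewrite <- Hass, x2'. reflexivity.
      * split; right.
        -- exists (exist inL x Hx). apply sig_ext; simpl. rewrite <- Hass, x1'. reflexivity.
        -- exists (iLs (o x)). reflexivity.
    + intros [E HE] [HEi [H1 H2]].
      unfold idempotent in HEi. apply (f_equal (@proj1_sig _ _)) in HEi. simpl in HEi.
      assert (A : m E x = x).
      { destruct H1 as [H1 | [[s' Hs'] H1]]; apply (f_equal (@proj1_sig _ _)) in H1; simpl in H1.
        - rewrite H1; exact HEi.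
        - rewrite H1, Hass, HEi. reflexivity. }
      assert (B : m (m x (j (o x))) E = E).
      { destruct H2 as [H2 | [[s' Hs'] H2]]; apply (f_equal (@proj1_sig _ _)) in H2; simpl in H2.
        - rewrite H2, <- Hass, x1'. reflexivity.
        - rewrite H2, (Hass (m x (j (o x))) x s'), <- (Hass x (j (o x)) x), x1'. reflexivity. }
      assert (C' : m E (m x (j (o x))) = m x (j (o x))) by (rewrite Hass, A; reflexivity).
      set (F := m x (j (o x))) in *.
      assert (HFi : m F F = F) by (unfold F; rewrite <- Hass, x2'; reflexivity).
      assert (Ia : m0 (o E) (o E) = o E) by (rewrite <- O1, HEi; reflexivity).
      assert (Ib : m0 (o F) (o F) = o F) by (rewrite <- O1, HFi; reflexivity).
      assert (Eab : m0 (o E) (o F) = o E) by (rewrite <- O1, B; reflexivity).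
      assert (Eba : m0 (o F) (o E) = o F) by (rewrite <- O1, C'; reflexivity).
      assert (Hab : o E = o F) by (rewrite <- Eab, (idc' _ _ Ia Ib), Eba; reflexivity).
      assert (HF : inL F) by (apply clL; [exact Hx | apply j_inL]).
      apply sig_ext; simpl. fold F.
      rewrite <- B, (lawL F E HF HE), (idi' _ Ia), Hab.
      unfold inL, phi1 in HF. rewrite (idi' _ Ib), <- jm', Ib in HF. symmetry; exact HF.
Qed.

Lemma Ls_qi : qi_inverse_transversal mLs m0 iLs oLs.
Proof.
  split; [|split; [|split; [|split]]].
  - intros s t; apply sig_ext; simpl; apply jm'.
  - intros s t H; apply (f_equal (@proj1_sig _ _)) in H; simpl in H; apply jinj'; exact H.
  - intros [x Hx]; split; apply sig_ext; simpl; rewrite <- Hass; [apply x1' | apply x2'].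
  - intros [x Hx] s [H1 H2]. apply (f_equal (@proj1_sig _ _)) in H1. apply (f_equal (@proj1_sig _ _)) in H2.
    simpl in H1, H2. unfold oLs; simpl. apply xuniq'; rewrite Hass; assumption.
  - intros s t [x Hx]. destruct (xqi' s t x) as [w Hw]. exists w. apply sig_ext; simpl.
    rewrite <- Hass; exact Hw.
Qed.

Lemma Rs_right : right_inverse_semigroup mRs.
Proof.
  split; [|split].
  - intros [a ?] [b ?] [c ?]; apply sig_ext; simpl; apply Hass.
  - intros [x Hx]; exists (iRs (o x)); apply sig_ext; simpl; rewrite <- Hass; apply x1'.
  - intros [x Hx]. exists (mRs (iRs (o x)) (exist inR x Hx)). split.
    + split.
      * unfold idempotent; apply sig_ext; simpl. rewrite <- Hass, x1'. reflexivity.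
      * split; right.
        -- exists (exist inR x Hx). apply sig_ext; simpl. rewrite x1'. reflexivity.
        -- exists (iRs (o x)). reflexivity.
    + intros [E HE] [HEi [H1 H2]].
      unfold idempotent in HEi. apply (f_equal (@proj1_sig _ _)) in HEi. simpl in HEi.
      assert (A : m x E = x).
      { destruct H1 as [H1 | [[s' Hs'] H1]]; apply (f_equal (@proj1_sig _ _)) in H1; simpl in H1.
        - rewrite H1; exact HEi.
        - rewrite H1, <- Hass, HEi. reflexivity. }
      assert (B : m E (m (j (o x)) x) = E).
      { destruct H2 as [H2 | [[s' Hs'] H2]]; apply (f_equal (@proj1_sig _ _)) in H2; simpl in H2.
        - rewrite H2, x1'. reflexivity.
        - rewrite H2, <- Hass, x1'. reflexivity. }
      assert (C' : m (m (j (o x)) x) E = m (j (o x)) x) by (rewrite <- Hass, A; reflexivity).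
      set (F := m (j (o x)) x) in *.
      assert (HFi : m F F = F) by (unfold F; rewrite <- Hass, x1'; reflexivity).
      assert (Ia : m0 (o E) (o E) = o E) by (rewrite <- O1, HEi; reflexivity).
      assert (Ib : m0 (o F) (o F) = o F) by (rewrite <- O1, HFi; reflexivity).
      assert (Eab : m0 (o F) (o E) = o E) by (rewrite <- O1, B; reflexivity).
      assert (Eba : m0 (o E) (o F) = o F) by (rewrite <- O1, C'; reflexivity).
      assert (Hab : o E = o F) by (rewrite <- Eab, (idc' _ _ Ib Ia), Eba; reflexivity).
      assert (HF : inR F) by (apply clR; [apply j_inR | exact Hx]).
      apply sig_ext; simpl. fold F.
      rewrite <- B, (lawR E F HE HF), (idi' _ Ia), Hab.
      unfold inR, phi2 in HF. rewrite (idi' _ Ib), Hass, <- jm', Ib in HF. symmetry; exact HF.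
Qed.

Lemma Rs_qi : qi_inverse_transversal mRs m0 iRs oRs.
Proof.
  split; [|split; [|split; [|split]]].
  - intros s t; apply sig_ext; simpl; apply jm'.
  - intros s t H; apply (f_equal (@proj1_sig _ _)) in H; simpl in H; apply jinj'; exact H.
  - intros [x Hx]; split; apply sig_ext; simpl; rewrite <- Hass; [apply x1' | apply x2'].
  - intros [x Hx] s [H1 H2]. apply (f_equal (@proj1_sig _ _)) in H1. apply (f_equal (@proj1_sig _ _)) in H2.
    simpl in H1, H2. unfold oRs; simpl. apply xuniq'; rewrite Hass; assumption.
  - intros s t [x Hx]. destruct (xqi' s t x) as [w Hw]. exists w. apply sig_ext; simpl.
    rewrite <- Hass; exact Hw.
Qed.

Lemma phi_car x : spined_carrier oLs oRs (exist inL (phi1 x) (phi1_in x), exist inR (phi2 x) (phi2_in x)).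
Proof. unfold spined_carrier, oLs, oRs; simpl; rewrite o_phi1, o_phi2; reflexivity. Qed.

Definition phi x : sig (spined_carrier oLs oRs) := exist _ _ (phi_car x).

Lemma RECON x : m (phi1 x) (m (j (o x)) (phi2 x)) = x.
Proof.
  unfold phi1, phi2.
  transitivity (m x (m (j (m0 (o x) (m0 (o (j (o x))) (m0 (o x) (m0 (o (j (o x))) (o x)))))) x)); [aeT|].
  rewrite !s1'. apply x1'.
Qed.

Lemma Er r : inR r -> m r (m (j (o r)) (j (o (j (o r))))) = j (o (j (o r))).
Proof.
  intro Hr. transitivity (m (phi2 r) (m (j (o r)) (j (o (j (o r)))))); [rewrite Hr; reflexivity|].
  unfold phi2.
  transitivity (m (j (o (j (o r)))) (m (m (j (o r)) (m r (j (o r)))) (j (o (j (o r)))))); [aeT|].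
  rewrite x2', <- !jm', s2'. reflexivity.
Qed.

Lemma El l : inL l -> m (j (o (j (o l)))) (m (j (o l)) l) = j (o (j (o l))).
Proof.
  intro Hl. transitivity (m (j (o (j (o l)))) (m (j (o l)) (phi1 l))); [rewrite Hl; reflexivity|].
  unfold phi1.
  transitivity (m (j (o (j (o l)))) (m (m (j (o l)) (m l (j (o l)))) (j (o (j (o l)))))); [aeT|].
  rewrite x2', <- !jm', s2'. reflexivity.
Qed.

Lemma part2_iso : is_isomorphism m
  (sub_mul _ _ (spined_closed mLs mRs m0 iLs oLs iRs oRs Ls_left Rs_right Ls_qi Rs_qi)) phi.
Proof.
  split; [|split].
  - intros x y. apply sig_ext; simpl. unfold spined_mul; simpl. f_equal; apply sig_ext; simpl.
    + unfold oLs; simpl. rewrite o_phi1. unfold phi1 at 1. rewrite PHI1. unfold phi1; aeT.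
    + unfold oRs; simpl. rewrite o_phi2. unfold phi2 at 1. rewrite PHI2. unfold phi2; aeT.
  - intros x y H. apply (f_equal (@proj1_sig _ _)) in H. simpl in H.
    assert (H1 := f_equal (fun p => proj1_sig (fst p)) H). assert (H2 := f_equal (fun p => proj1_sig (snd p)) H).
    simpl in H1, H2.
    assert (Ho : o x = o y) by (rewrite <- (o_phi1 x), <- (o_phi1 y), H1; reflexivity).
    rewrite <- (RECON x), <- (RECON y), H1, H2, Ho. reflexivity.
  - intros [[[l Hl] [r Hr]] Hc]. unfold spined_carrier, oLs, oRs in Hc; simpl in Hc.
    exists (m l (m (j (o l)) r)).
    assert (Ox : o (m l (m (j (o l)) r)) = o l).
    { rewrite !O1, <- Hc, <- m0A'. apply s1'. }
    apply sig_ext; simpl. f_equal; apply sig_ext; simpl.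
    + unfold phi1. rewrite Ox.
      transitivity (m l (m (j (o l)) (m r (m (j (o l)) (j (o (j (o l)))))))); [aeT|].
      rewrite Hc, (Er r Hr), <- Hc. exact Hl.
    + unfold phi2. rewrite Ox.
      transitivity (m (m (j (o (j (o l)))) (m (j (o l)) l)) (m (j (o l)) r)); [aeT|].
      rewrite (El l Hl), Hc. exact Hr.
Qed.
End Part2.

Theorem corollary4p5 :
  (* Part 1: L |x| R is orthodox with a quasi-ideal inverse transversal ≅ S^0 *)
  (forall (L R S0 : Type) (mL : L -> L -> L) (mR : R -> R -> R)
          (m0 : S0 -> S0 -> S0)
          (iL : S0 -> L) (oL : L -> S0) (iR : S0 -> R) (oR : R -> S0),
      left_inverse_semigroup mL ->
      right_inverse_semigroup mR ->
      qi_inverse_transversal mL m0 iL oL ->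
      qi_inverse_transversal mR m0 iR oR ->
      exists Hcl : (forall u v,
                      spined_carrier oL oR u -> spined_carrier oL oR v ->
                      spined_carrier oL oR (spined_mul mL mR iL oL iR oR u v)),
        orthodox_semigroup (sub_mul _ _ Hcl) /\
        exists (j : S0 -> sig (spined_carrier oL oR))
               (o : sig (spined_carrier oL oR) -> S0),
          qi_inverse_transversal (sub_mul _ _ Hcl) m0 j o)
  /\
  (* Part 2: every orthodox semigroup with a q.i. inverse transversal arises so *)
  (forall (S S0 : Type) (m : S -> S -> S) (m0 : S0 -> S0 -> S0)
          (j : S0 -> S) (o : S -> S0),
      orthodox_semigroup m ->
      qi_inverse_transversal m m0 j o ->
      exists (L R : Type) (mL : L -> L -> L) (mR : R -> R -> R)
             (iL : S0 -> L) (oL : L -> S0) (iR : S0 -> R) (oR : R -> S0),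
        left_inverse_semigroup mL /\
        right_inverse_semigroup mR /\
        qi_inverse_transversal mL m0 iL oL /\
        qi_inverse_transversal mR m0 iR oR /\
        exists (Hcl : forall u v,
                  spined_carrier oL oR u -> spined_carrier oL oR v ->
                  spined_carrier oL oR (spined_mul mL mR iL oL iR oR u v))
               (phi : S -> sig (spined_carrier oL oR)),
          is_isomorphism m (sub_mul _ _ Hcl) phi).
Proof.
  split.
  - intros L R S0 mL mR m0 iL oL iR oR HL HR HqL HqR.
    exact (part1_main mL mR m0 iL oL iR oR HL HR HqL HqR).
  - intros S S0 m m0 j o HO Hq.
    exists (sig (inL m j o)), (sig (inR m j o)), (mLs m m0 j o HO Hq), (mRs m m0 j o HO Hq),
      (iLs m m0 j o HO Hq), (oLs m j o), (iRs m m0 j o HO Hq), (oRs m j o).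
    split; [apply Ls_left|]. split; [apply Rs_right|].
    split; [apply Ls_qi|]. split; [apply Rs_qi|].
    exists (spined_closed _ _ _ _ _ _ _ (Ls_left m m0 j o HO Hq) (Rs_right m m0 j o HO Hq)
              (Ls_qi m m0 j o HO Hq) (Rs_qi m m0 j o HO Hq)).
    exists (phi m m0 j o HO Hq).
    apply part2_iso.
Qed.
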